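(* Let $\alpha:A^{\Delta}\to(H,V)$ be a homomorphism onto a finite forest algebra with $H$ idempotent and commutative, and let $\Gamma\subseteq H$ be a reachability class. Define subsets $B_0,B_1,\ldots$ of $\Gamma\times\Gamma$ by: $B_0=\{(h,h')\in\Gamma\times\Gamma:h\neq h'\}$, and for $j\ge 0$, $B_{j+1}$ is the smallest set that contains $\{(\alpha(a)h,\alpha(a)h'):a\in A,\ (h,h')\in B_j,\ (\alpha(a)h,\alpha(a)h')\in B_0\}$ and is closed under the rules: (i) if $(h,h')\in B_{j+1}$, $g\in H$ and $(h+g,h'+g)\in B_0$ then $(h+g,h'+g)\in B_{j+1}$; (ii) if $(h,h'),(g,g')\in B_{j+1}$ and $(h+g,h'+g')\in B_0$ then $(h+g,h'+g')\in B_{j+1}$. Then for all $h,h'\in\Gamma$ with $h\ne h'$ and all $k\ge0$: $(h,h')\in B_k$ if and only if there exist forests $s,t\in H_A$ with $(s)^{\alpha_\Gamma}\sim_k(t)^{\alpha_\Gamma}$, $\alpha(s)=h$ and $\alpha(t)=h'$. Moreover $B_{k+1}\subseteq B_k$ for all $k\ge0$.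
   Context: $A^{\Delta}=(H_A,V_A)$: free forest algebra over finite alphabet $A$; $H_A$ forests (finite ordered sequences of finite ordered $A$-labelled trees) under concatenation; $V_A$ contexts (forests with one hole) acting by substitution; $as$ is the tree with root $a$ and child forest $s$. A forest algebra $(H,V)$ is an additive monoid $H$ with a monoid $V$ acting faithfully on the left, containing the maps $g\mapsto g+h$, $g\mapsto h+g$. For $a\in A$, $\alpha(a)$ is the image of the context $a\square$. Reachability: $h\le h'$ iff $h=vh'$ for some $v\in V$; a reachability class is a class of the relation ($h\le h'$ and $h'\le h$); $h>\Gamma$ means the class of $h$ is strictly above $\Gamma$. $\alpha_\Gamma:A^{\Delta}\to(H_\Gamma,V_\Gamma)$ is the quotient homomorphism identifying all elements of $\{h:h\not>\Gamma\}$ to a single absorbing element $\infty$ (forests identified iff equal values outside this set or both values in it). For a forest $s$, $s^{\alpha_\Gamma}$ is the forest over $A\times H_\Gamma$ obtained by relabeling each node whose subtree is $at$ with $(a,\alpha_\Gamma(t))$. For an alphabet $B$, $\sim_0$ identifies all forests over $B$, and for $s=b_1s_1+\cdots+b_rs_r$, $s\sim_{k+1}s'$ iff $\{(b_i,[s_i]_{\sim_k}):1\le i\le r\}$ equals the corresponding set for $s'$. *)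

(* Defs.v *)
From Stdlib Require List.
From mathcomp Require Import all_boot.
Set Implicit Arguments. Unset Strict Implicit. Unset Printing Implicit Defensive.

Inductive tree (A : Type) : Type := Node of A & list (tree A).
Arguments Node {A}.
Definition forest (A : Type) := seq (tree A).

Definition label (A : Type) (t : tree A) : A := let: Node a _ := t in a.
Definition children (A : Type) (t : tree A) : forest A := let: Node _ s := t in s.

(* Contexts: forests with exactly one hole.
   CHole l r      denotes  l + [] + r
   CIn l a c r    denotes  l + a(c) + r *)
Inductive context (A : Type) : Type :=
| CHole of forest A & forest A
| CIn of forest A & A & context A & forest A.
Arguments CHole {A}. Arguments CIn {A}.

Fixpoint fill (A : Type) (p : context A) (s : forest A) : forest A :=
  match p with
  | CHole l r => l ++ s ++ r
  | CIn l a c r => l ++ Node a (fill c s) :: r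
  end.

Definition cwrap (A : Type) (l r : forest A) (q : context A) : context A :=
  match q with
  | CHole l' r' => CHole (l ++ l') (r' ++ r)
  | CIn l' a c r' => CIn (l ++ l') a c (r' ++ r)
  end.

(* composition of contexts: fill (ccomp p q) s = fill p (fill q s) *)
Fixpoint ccomp (A : Type) (p q : context A) : context A :=
  match p with
  | CHole l r => cwrap l r q
  | CIn l a c r => CIn l a (ccomp c q) r
  end.

Definition cid (A : Type) : context A := CHole [::] [::].
Definition cletter (A : Type) (a : A) : context A := CIn [::] a (cid A) [::].

Record forest_algebra := ForestAlgebra {
  fa_H : finType;
  fa_V : finType;
  fa_add : fa_H -> fa_H -> fa_H;
  fa_zero : fa_H;
  fa_comp : fa_V -> fa_V -> fa_V;
  fa_one : fa_V;
  fa_act : fa_V -> fa_H -> fa_H;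
  fa_addA : associative fa_add;
  fa_add0 : left_id fa_zero fa_add;
  fa_addr0 : right_id fa_zero fa_add;
  fa_compA : associative fa_comp;
  fa_comp1 : left_id fa_one fa_comp;
  fa_compr1 : right_id fa_one fa_comp;
  fa_actM : forall v w h, fa_act (fa_comp v w) h = fa_act v (fa_act w h);
  fa_act1 : forall h, fa_act fa_one h = h;
  fa_faithful : forall v w, (forall h, fa_act v h = fa_act w h) -> v = w;
  fa_insr : forall h, exists v, forall g, fa_act v g = fa_add g h;
  fa_insl : forall h, exists v, forall g, fa_act v g = fa_add h g
}.

Arguments fa_add : clear implicits. Arguments fa_zero : clear implicits.
Arguments fa_comp : clear implicits. Arguments fa_one : clear implicits.
Arguments fa_act : clear implicits.

Definition is_fa_hom (A : Type) (F : forest_algebra)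
    (aH : forest A -> fa_H F) (aV : context A -> fa_V F) : Prop :=
  [/\ aH [::] = fa_zero F,
      forall s t, aH (s ++ t) = fa_add F (aH s) (aH t),
      aV (cid A) = fa_one F,
      forall p q, aV (ccomp p q) = fa_comp F (aV p) (aV q) &
      forall p s, aH (fill p s) = fa_act F (aV p) (aH s)].

Definition reach (F : forest_algebra) (h h' : fa_H F) : bool :=
  [exists v, h == fa_act F v h'].

Definition is_reach_class (F : forest_algebra) (Gamma : {set fa_H F}) : Prop :=
  exists h0, forall h, (h \in Gamma) = reach h h0 && reach h0 h.

Definition above (F : forest_algebra) (Gamma : {set fa_H F}) (h : fa_H F) : bool :=
  [exists g in Gamma, reach g h && ~~ reach h g].

(* alpha_Gamma, with H_Gamma represented as option H:
   Some h for h > Gamma, None for the absorbing element infinity *)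
Definition alphaG (A : Type) (F : forest_algebra) (aH : forest A -> fa_H F)
    (Gamma : {set fa_H F}) (s : forest A) : option (fa_H F) :=
  if above Gamma (aH s) then Some (aH s) else None.

Section Relabel.
Variables (A B : Type) (f : A -> forest A -> B).
Fixpoint relabel_tree (t : tree A) : tree B :=
  match t with Node a s => Node (f a s) (map relabel_tree s) end.
Definition relabel (s : forest A) : forest B := map relabel_tree s.
End Relabel.

Definition relabelG (A : Type) (F : forest_algebra) (aH : forest A -> fa_H F)
    (Gamma : {set fa_H F}) (s : forest A) : forest (A * option (fa_H F)) :=
  relabel (fun a t => (a, alphaG aH Gamma t)) s.

Fixpoint simk (B : Type) (k : nat) (s t : forest B) : Prop :=
  match k with
  | 0 => True
  | k'.+1 =>
      (forall u, List.In u s -> exists v, List.In v t /\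
          label u = label v /\ simk k' (children u) (children v)) /\
      (forall v, List.In v t -> exists u, List.In u s /\
          label u = label v /\ simk k' (children u) (children v))
  end.

Definition B0 (F : forest_algebra) (Gamma : {set fa_H F}) (h h' : fa_H F) : Prop :=
  [/\ h \in Gamma, h' \in Gamma & h <> h'].

Inductive Bnext (A : Type) (F : forest_algebra) (al : A -> fa_V F)
    (Gamma : {set fa_H F}) (Bprev : fa_H F -> fa_H F -> Prop)
    : fa_H F -> fa_H F -> Prop :=
| Bnext_base a h h' :
    Bprev h h' -> B0 Gamma (fa_act F (al a) h) (fa_act F (al a) h') ->
    Bnext al Gamma Bprev (fa_act F (al a) h) (fa_act F (al a) h')
| Bnext_add1 h h' g :
    Bnext al Gamma Bprev h h' -> B0 Gamma (fa_add F h g) (fa_add F h' g) ->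
    Bnext al Gamma Bprev (fa_add F h g) (fa_add F h' g)
| Bnext_add2 h h' g g' :
    Bnext al Gamma Bprev h h' -> Bnext al Gamma Bprev g g' ->
    B0 Gamma (fa_add F h g) (fa_add F h' g') ->
    Bnext al Gamma Bprev (fa_add F h g) (fa_add F h' g').

Fixpoint Bset (A : Type) (F : forest_algebra) (al : A -> fa_V F)
    (Gamma : {set fa_H F}) (j : nat) : fa_H F -> fa_H F -> Prop :=
  match j with
  | 0 => B0 Gamma
  | j'.+1 => Bnext al Gamma (Bset al Gamma j')
  end.

(* Main.v *)
Require Import Defs.
From mathcomp Require Import all_boot.
Set Implicit Arguments. Unset Strict Implicit. Unset Printing Implicit Defensive.

Lemma reach_refl (F : forest_algebra) (h : fa_H F) : reach h h.
Proof. apply/existsP; exists (fa_one F); by rewrite fa_act1. Qed.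

Lemma reach_trans (F : forest_algebra) (a b c : fa_H F) :
  reach a b -> reach b c -> reach a c.
Proof.
move=> /existsP [v /eqP ->] /existsP [w /eqP ->].
apply/existsP; exists (fa_comp F v w); by rewrite fa_actM.
Qed.

Lemma reach_act (F : forest_algebra) (v : fa_V F) h : reach (fa_act F v h) h.
Proof. by apply/existsP; exists v. Qed.

Lemma reach_addr (F : forest_algebra) (h g : fa_H F) : reach (fa_add F h g) h.
Proof. have [v Hv] := fa_insr g. apply/existsP; exists v; by rewrite Hv. Qed.

Lemma reach_addl (F : forest_algebra) (h g : fa_H F) : reach (fa_add F g h) h.
Proof. have [v Hv] := fa_insl g. apply/existsP; exists v; by rewrite Hv. Qed.

Lemma Bnext_B0 A F (al : A -> fa_V F) Gamma P x y :
  Bnext al Gamma P x y -> B0 Gamma x y.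
Proof. by case. Qed.

Lemma Bset_B0 A F (al : A -> fa_V F) Gamma k x y :
  Bset al Gamma k x y -> B0 Gamma x y.
Proof. case: k => [//|k] /=; exact: Bnext_B0. Qed.

Lemma Bnext_mono A F (al : A -> fa_V F) Gamma (P Q : fa_H F -> fa_H F -> Prop) x y :
  (forall x y, P x y -> Q x y) -> Bnext al Gamma P x y -> Bnext al Gamma Q x y.
Proof.
move=> PQ; elim=> [a h h' /PQ Hp Hb|h h' g _ IH Hb|h h' g g' _ IH1 _ IH2 Hb].
- exact: Bnext_base.
- exact: Bnext_add1.
- exact: Bnext_add2.
Qed.

Lemma Bset_dec A F (al : A -> fa_V F) Gamma k x y :
  Bset al Gamma k.+1 x y -> Bset al Gamma k x y.
Proof.
elim: k x y => [|k IH] x y /=; first exact: Bnext_B0.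
apply: Bnext_mono; exact: IH.
Qed.

Lemma simk_refl B k (s : forest B) : simk k s s.
Proof.
elim: k s => [//|k IH] s /=; split=> u Hu; exists u; split => //; split => //.
Qed.

Lemma simk_cat B k (x x' y y' : forest B) :
  simk k x y -> simk k x' y' -> simk k (x ++ x') (y ++ y').
Proof.
case: k => [//|k] /= [H1 H2] [H3 H4]; split.
- move=> u /List.in_app_iff [Hu|Hu].
  + have [v [Hv E]] := H1 u Hu; exists v; split => //; apply/List.in_app_iff; by left.
  + have [v [Hv E]] := H3 u Hu; exists v; split => //; apply/List.in_app_iff; by right.
- move=> v /List.in_app_iff [Hv|Hv].
  + have [u [Hu E]] := H2 v Hv; exists u; split => //; apply/List.in_app_iff; by left.
  + have [u [Hu E]] := H4 v Hv; exists u; split => //; apply/List.in_app_iff; by right.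
Qed.

Lemma hom_node (A : Type) F (aH : forest A -> fa_H F) aV a c :
  is_fa_hom aH aV -> aH [:: Node a c] = fa_act F (aV (cletter a)) (aH c).
Proof.
case=> _ _ _ _ Hf; rewrite -Hf /= cats0 //.
Qed.

Lemma hom_cons (A : Type) F (aH : forest A -> fa_H F) aV u r :
  is_fa_hom aH aV -> aH (u :: r) = fa_add F (aH [:: u]) (aH r).
Proof. case=> _ Hc _ _ _; by rewrite -Hc. Qed.

Lemma in_GammaE F (Gamma : {set fa_H F}) h0 :
  (forall h, (h \in Gamma) = reach h h0 && reach h0 h) ->
  forall h g, h \in Gamma -> g \in Gamma -> reach h g.
Proof.
move=> HG h g; rewrite !HG => /andP [H1 _] /andP [_ H2]; exact: reach_trans H1 H2.
Qed.

Lemma not_above F (Gamma : {set fa_H F}) h :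
  is_reach_class Gamma -> h \in Gamma -> ~~ above Gamma h.
Proof.
move=> [h0 HG] Hh; apply/existsP => [[g /andP [Hg /andP [_ /negP]]]]; apply.
exact: (in_GammaE HG).
Qed.

Lemma relabelG_cat (A : Type) F (aH : forest A -> fa_H F) Gamma s t :
  relabelG aH Gamma (s ++ t) = relabelG aH Gamma s ++ relabelG aH Gamma t.
Proof. by rewrite /relabelG /relabel map_cat. Qed.

Lemma fwd (A : Type) F (aH : forest A -> fa_H F) aV Gamma :
  is_fa_hom aH aV -> (forall h, exists s, aH s = h) -> is_reach_class Gamma ->
  forall k h h', Bset (fun a => aV (cletter a)) Gamma k h h' ->
  exists s t, [/\ simk k (relabelG aH Gamma s) (relabelG aH Gamma t),
            aH s = h & aH t = h'].
Proof.
move=> Hom Hsurj HR; elim=> [|k IH] h h' /=.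
  move=> _; have [s Hs] := Hsurj h; have [t Ht] := Hsurj h'; by exists s, t.
have Hcat : forall s t, aH (s ++ t) = fa_add F (aH s) (aH t) by case: Hom.
elim.
- move=> a g g' Hb _.
  have [s [t [Hst Hs Ht]]] := IH _ _ Hb.
  have [Hg Hg' _] := Bset_B0 Hb.
  exists [:: Node a s], [:: Node a t]; split; last first.
    by rewrite (hom_node a t Hom) Ht.
  by rewrite (hom_node a s Hom) Hs.
  have Ea : alphaG aH Gamma s = alphaG aH Gamma t.
    by rewrite /alphaG Hs Ht (negbTE (not_above HR Hg)) (negbTE (not_above HR Hg')).
  rewrite /= Ea; split=> u [<-|[]]; eexists; (split; first by left); split => //.
- move=> g g' r _ [s [t [Hst Hs Ht]]] _.
  have [x Hx] := Hsurj r.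
  exists (s ++ x), (t ++ x); rewrite !Hcat !relabelG_cat Hs Ht Hx; split => //.
  exact: (simk_cat (k:=k.+1) Hst (simk_refl _ _)).
- move=> g g' r r' _ [s [t [Hst Hs Ht]]] _ [s' [t' [Hst' Hs' Ht']]] _.
  exists (s ++ s'), (t ++ t'); rewrite !Hcat !relabelG_cat Hs Ht Hs' Ht'; split => //.
  exact: (simk_cat (k:=k.+1)).
Qed.

Definition sumH (F : forest_algebra) (l : seq (fa_H F)) : fa_H F :=
  foldr (fa_add F) (fa_zero F) l.

Lemma sumH_cat F (l1 l2 : seq (fa_H F)) :
  sumH (l1 ++ l2) = fa_add F (sumH l1) (sumH l2).
Proof.
elim: l1 => [|x l IH] /=; first by rewrite fa_add0.
by rewrite /sumH /= -/(sumH _) IH fa_addA.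
Qed.

Lemma hom_sum (A : Type) F (aH : forest A -> fa_H F) aV s :
  is_fa_hom aH aV -> aH s = sumH (map (fun u => aH [:: u]) s).
Proof.
move=> Hom; elim: s => [|u s IH]; first by case: Hom.
by rewrite (hom_cons _ _ Hom) IH.
Qed.

Lemma absorb1 F (idem : forall h : fa_H F, fa_add F h h = h)
  (comm : forall h g : fa_H F, fa_add F h g = fa_add F g h) xs y :
  List.In y xs -> fa_add F (sumH xs) y = sumH xs.
Proof.
elim: xs => [//|x xs IH] /= [->|Hy].
- by rewrite /sumH /= -/(sumH _) comm fa_addA idem.
- by rewrite /sumH /= -/(sumH _) -fa_addA IH.
Qed.

Lemma absorb F (idem : forall h : fa_H F, fa_add F h h = h)
  (comm : forall h g : fa_H F, fa_add F h g = fa_add F g h) xs ys :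
  (forall y, List.In y ys -> List.In y xs) -> fa_add F (sumH xs) (sumH ys) = sumH xs.
Proof.
elim: ys => [|y ys IH] Hsub; first by rewrite fa_addr0.
rewrite /sumH /= -/(sumH _) fa_addA absorb1 //; last by apply: Hsub; left.
apply: IH => z Hz; apply: Hsub; by right.
Qed.

Lemma inG F (Gamma : {set fa_H F}) h0 :
  (forall h, (h \in Gamma) = reach h h0 && reach h0 h) ->
  forall x z, x \in Gamma -> reach h0 z -> reach z x -> z \in Gamma.
Proof.
move=> HG x z Hx H1 H2; rewrite HG H1 andbT; move: Hx; rewrite HG => /andP [Hx _].
exact: reach_trans H2 Hx.
Qed.

Lemma comb F (Gamma : {set fa_H F}) h0 (P : fa_H F -> fa_H F -> Prop) :
  (forall h, (h \in Gamma) = reach h h0 && reach h0 h) ->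
  (forall h g : fa_H F, fa_add F h g = fa_add F g h) ->
  (forall x y, P x y -> B0 Gamma x y) ->
  (forall x y g, P x y -> B0 Gamma (fa_add F x g) (fa_add F y g) ->
      P (fa_add F x g) (fa_add F y g)) ->
  (forall x y g g', P x y -> P g g' -> B0 Gamma (fa_add F x g) (fa_add F y g') ->
      P (fa_add F x g) (fa_add F y g')) ->
  forall L : seq (fa_H F * fa_H F),
  (forall p, List.In p L -> p.1 = p.2 \/ P p.1 p.2) ->
  reach h0 (sumH (map fst L)) -> reach h0 (sumH (map snd L)) ->
  sumH (map fst L) = sumH (map snd L) \/ P (sumH (map fst L)) (sumH (map snd L)).
Proof.
move=> HG comm HB r1 r2; elim=> [|[x y] L IH] HL /=; first by left.
rewrite /sumH /= -!/(sumH _) => Rx Ry.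
have Rx' := reach_trans Rx (reach_addl _ _).
have Ry' := reach_trans Ry (reach_addl _ _).
have IH' := IH (fun p Hp => HL p (or_intror Hp)) Rx' Ry'.
set S1 := sumH _ in IH' Rx Rx' *; set S2 := sumH _ in IH' Ry Ry' *.
case: (eqVneq (fa_add F x S1) (fa_add F y S2)) => [E|Ne]; first by left.
right.
case: (HL (x, y) (or_introl erefl)) => /= [Exy|Pxy]; case: IH' => [E12|P12].
- by move: Ne; rewrite Exy E12 eqxx.
- rewrite Exy in Rx Ne *; rewrite ![fa_add F y _]comm in Rx Ry Ne *.
  have [G1 G2 _] := HB _ _ P12.
  apply: r1 => //; split.
  + exact: (inG HG G1 Rx (reach_addr _ _)).
  + exact: (inG HG G2 Ry (reach_addr _ _)).
  + exact/eqP.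
- rewrite E12 in Rx Ne *.
  have [G1 G2 _] := HB _ _ Pxy.
  apply: r1 => //; split.
  + exact: (inG HG G1 Rx (reach_addr _ _)).
  + exact: (inG HG G2 Ry (reach_addr _ _)).
  + exact/eqP.
- have [G1 G2 _] := HB _ _ Pxy.
  apply: r2 => //; split.
  + exact: (inG HG G1 Rx (reach_addr _ _)).
  + exact: (inG HG G2 Ry (reach_addr _ _)).
  + exact/eqP.
Qed.

Lemma pairing (T U : Type) (Q : T -> U -> Prop) (s : seq T) (t : seq U) :
  (forall u, List.In u s -> exists v, List.In v t /\ Q u v) ->
  exists L : seq (T * U), map fst L = s /\
    forall p, List.In p L -> List.In p.2 t /\ Q p.1 p.2.
Proof.
elim: s => [|u s IH] H; first by exists [::].
have [L [E HL]] := IH (fun u Hu => H u (or_intror Hu)).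
have [v [Hv Q1]] := H u (or_introl erefl).
exists ((u, v) :: L); split; first by rewrite /= E.
by move=> p /= [<-|Hp] //; apply: HL.
Qed.

Lemma pairing' (T U : Type) (Q : T -> U -> Prop) (s : seq T) (t : seq U) :
  (forall v, List.In v t -> exists u, List.In u s /\ Q u v) ->
  exists L : seq (T * U), map snd L = t /\
    forall p, List.In p L -> List.In p.1 s /\ Q p.1 p.2.
Proof.
move=> H; have [L [E HL]] := pairing (Q := fun v u => Q u v) H.
exists (map (fun p => (p.2, p.1)) L); split.
- by rewrite -map_comp -E.
- move=> p /List.in_map_iff [q [<- Hq]] /=; exact: HL.
Qed.

Lemma reach_in (A : Type) F (aH : forest A -> fa_H F) aV s u :
  is_fa_hom aH aV -> List.In u s -> reach (aH s) (aH [:: u]).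
Proof.
move=> Hom Hu; have [l1 [l2 ->]] := List.in_split _ _ Hu.
have Hc : forall s t, aH (s ++ t) = fa_add F (aH s) (aH t) by case: Hom.
rewrite Hc (hom_cons _ _ Hom).
exact: reach_trans (reach_addl _ _) (reach_addr _ _).
Qed.

Lemma bwd_step (A : Type) F (aH : forest A -> fa_H F) aV (Gamma : {set fa_H F}) (h0 : fa_H F) k :
  is_fa_hom aH aV ->
  (forall h, fa_add F h h = h) ->
  (forall h g, fa_add F h g = fa_add F g h) ->
  (forall h, (h \in Gamma) = reach h h0 && reach h0 h) ->
  (forall h h', h \in Gamma -> h' \in Gamma -> h <> h' ->
     (exists s t : forest A,
        [/\ simk k (relabelG aH Gamma s) (relabelG aH Gamma t),
            aH s = h & aH t = h']) ->
     Bset (fun a => aV (cletter a)) Gamma k h h') ->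
  forall (s t : forest A), aH s \in Gamma -> aH t \in Gamma -> aH s <> aH t ->
  simk k.+1 (relabelG aH Gamma s) (relabelG aH Gamma t) ->
  Bset (fun a => aV (cletter a)) Gamma k.+1 (aH s) (aH t).
Proof.
move=> Hom idem comm HG IHk s t Hs Ht Nst [S1 S2].
have HR : is_reach_class Gamma by exists h0.
pose Q (u v : tree A) := exists a c c', [/\ u = Node a c, v = Node a c',
   alphaG aH Gamma c = alphaG aH Gamma c' &
   simk k (relabelG aH Gamma c) (relabelG aH Gamma c')].
have Hst : forall u, List.In u s -> exists v, List.In v t /\ Q u v.
  move=> u Hu.
  have [v' [Hv' [El Ec]]] := S1 _ (List.in_map (relabel_tree _) _ _ Hu).
  move: Hv' => /List.in_map_iff [v [Ev Hv]]; exists v; split => //.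
  move: Ev El Ec; case: u {Hu} => a c; case: v {Hv} => a' c' <- /= [<- Ea] Ec.
  by exists a, c, c'.
have Hts : forall v, List.In v t -> exists u, List.In u s /\ Q u v.
  move=> v Hv.
  have [u' [Hu' [El Ec]]] := S2 _ (List.in_map (relabel_tree _) _ _ Hv).
  move: Hu' => /List.in_map_iff [u [Eu Hu]]; exists u; split => //.
  move: Eu El Ec; case: u {Hu} => a c; case: v {Hv} => a' c' <- /= [<- Ea] Ec.
  by exists a, c, c'.
have [L1 [E1 HL1]] := pairing Hst.
have [L2 [E2 HL2]] := pairing' Hts.
pose f (p : tree A * tree A) := (aH [:: p.1], aH [:: p.2]).
pose L := map f (L1 ++ L2).
have Hfst : sumH (map fst L) = aH s.
  rewrite /L -map_comp map_cat sumH_cat.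
  have -> : map (fst \o f) L1 = map (fun u => aH [:: u]) s by rewrite -E1 -map_comp.
  rewrite -(hom_sum _ Hom) (hom_sum s Hom); apply: absorb => // y.
  move=> /List.in_map_iff [p [<- Hp]] /=; apply: List.in_map.
  exact: (proj1 (HL2 _ Hp)).
have Hsnd : sumH (map snd L) = aH t.
  rewrite /L -map_comp map_cat sumH_cat.
  have -> : map (snd \o f) L2 = map (fun u => aH [:: u]) t by rewrite -E2 -map_comp.
  rewrite -(hom_sum _ Hom) (hom_sum t Hom) comm; apply: absorb => // y.
  move=> /List.in_map_iff [p [<- Hp]] /=; apply: List.in_map.
  exact: (proj1 (HL1 _ Hp)).
have Hpair : forall u v, List.In u s -> List.In v t -> Q u v ->
    aH [:: u] = aH [:: v] \/
    Bnext (fun a => aV (cletter a)) Gamma (Bset (fun a => aV (cletter a)) Gamma k)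
      (aH [:: u]) (aH [:: v]).
  move=> u v Hu Hv [a [c [c' [Eu Ev Ea Ec]]]]; subst u v.
  rewrite !(hom_node _ _ Hom).
  have Rc : reach (aH s) (aH c).
    apply: reach_trans (reach_in Hom Hu) _; rewrite (hom_node _ _ Hom).
    exact: reach_act.
  have Rc' : reach (aH t) (aH c').
    apply: reach_trans (reach_in Hom Hv) _; rewrite (hom_node _ _ Hom).
    exact: reach_act.
  move: Ea; rewrite /alphaG.
  case Ha: (above Gamma (aH c)); case Ha': (above Gamma (aH c')) => // Ea.
    by case: Ea => ->; left.
  have inC : forall x z, x \in Gamma -> reach x z -> ~~ above Gamma z -> z \in Gamma.
    move=> x z Hx Rxz Nz; apply: (inG HG Hx).
    - move: Hx; rewrite HG => /andP [_ H]; exact: reach_trans H Rxz.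
    - apply: contraNT Nz => Nr; apply/existsP; exists x; by rewrite Hx Rxz Nr.
  have Gc := inC _ _ Hs Rc (negbT Ha).
  have Gc' := inC _ _ Ht Rc' (negbT Ha').
  case: (eqVneq (aH c) (aH c')) => [->|Ncc]; first by left.
  have Bk := IHk _ _ Gc Gc' (elimN eqP Ncc) (ex_intro _ c (ex_intro _ c' (And3 Ec erefl erefl))).
  case: (eqVneq (fa_act F (aV (cletter a)) (aH c)) (fa_act F (aV (cletter a)) (aH c'))) => [E|Nx]; first by left.
  right; apply: Bnext_base => //; split.
  - apply: (inG HG Gc); last exact: reach_act.
    move: Hs; rewrite HG => /andP [_ H]; apply: reach_trans H _.
    by rewrite -(hom_node _ _ Hom); exact: reach_in Hom Hu.
  - apply: (inG HG Gc'); last exact: reach_act.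
    move: Ht; rewrite HG => /andP [_ H]; apply: reach_trans H _.
    by rewrite -(hom_node _ _ Hom); exact: reach_in Hom Hv.
  - exact/eqP.
have := @comb F Gamma h0 (Bnext (fun a => aV (cletter a)) Gamma (Bset (fun a => aV (cletter a)) Gamma k)) HG comm (@Bnext_B0 _ _ _ _ _)
  (fun x y g H1 H2 => Bnext_add1 H1 H2) (fun x y g g' H1 H2 H3 => Bnext_add2 H1 H2 H3) L.
rewrite Hfst Hsnd; case.
- move=> p /List.in_map_iff [q [<- /List.in_app_iff [Hq|Hq]]].
  + have [Hv Qq] := HL1 _ Hq; apply: Hpair => //.
    rewrite -E1; exact: List.in_map.
  + have [Hu Qq] := HL2 _ Hq; apply: Hpair => //.
    rewrite -E2; exact: List.in_map.
- by move: Hs; rewrite HG => /andP [].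
- by move: Ht; rewrite HG => /andP [].
- by [].
- by [].
Qed.

Theorem theorem4 (A : finType) (F : forest_algebra)
    (aH : forest A -> fa_H F) (aV : context A -> fa_V F)
    (Gamma : {set fa_H F}) :
  is_fa_hom aH aV ->
  (forall h, exists s, aH s = h) ->
  (forall v, exists p, aV p = v) ->
  (forall h, fa_add F h h = h) ->
  (forall h g, fa_add F h g = fa_add F g h) ->
  is_reach_class Gamma ->
  (forall (k : nat) (h h' : fa_H F), h \in Gamma -> h' \in Gamma -> h <> h' ->
     (Bset (fun a => aV (cletter a)) Gamma k h h' <->
      exists s t : forest A,
        [/\ simk k (relabelG aH Gamma s) (relabelG aH Gamma t),
            aH s = h & aH t = h'])) /\
  (forall (k : nat) (h h' : fa_H F),
     Bset (fun a => aV (cletter a)) Gamma k.+1 h h' ->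
     Bset (fun a => aV (cletter a)) Gamma k h h').
Proof.
move=> Hom Hsurj _ idem comm HR; split; last by move=> k h h'; exact: Bset_dec.
have bwd : forall k h h', h \in Gamma -> h' \in Gamma -> h <> h' ->
    (exists s t : forest A,
        [/\ simk k (relabelG aH Gamma s) (relabelG aH Gamma t),
            aH s = h & aH t = h']) ->
    Bset (fun a => aV (cletter a)) Gamma k h h'.
  have [h0 HG] := HR.
  elim=> [|k IH] h h' Hh Hh' Nh; first by move=> _; split.
  move=> [s [t [Sst Hs Ht]]]; subst h h'.
  exact: (bwd_step Hom idem comm HG IH).
move=> k h h' Hh Hh' Nh; split; last exact: bwd.
exact: fwd.
Qed.
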